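(* For every $k\ge 0$, the complete graph $K_{3k+4}$ is a semi-arc $k$-visibility graph.
   Context: A semi-arc $k$-visibility representation is a finite collection of pairwise disjoint circular arcs centered at a common point $O$, all starting on one common radial ray from $O$ and extending counterclockwise from it. A line of sight is a segment contained in a line through $O$ (it may pass through $O$) with endpoints on two arcs and intersecting at most $k$ other arcs (an arc met twice by the radial line is counted once). The semi-arc $k$-visibility graph has one vertex per arc, two vertices being adjacent when their arcs are joined by a line of sight. *)

(* Defs.v *)
From Stdlib Require Import Reals.
From mathcomp Require Import all_boot.

Set Implicit Arguments.
Unset Strict Implicit.
Unset Printing Implicit Defensive.

Local Open Scope R_scope.

(* Points of the plane; the common center O is the origin (0,0) and the
   common starting ray is the positive x-axis (WLOG by a rigid motion). *)
Definition point := (R * R)%type.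

Definition on_arc (r th : R) (p : point) : Prop :=
  exists a : R, 0 <= a <= th /\ p = (r * cos a, r * sin a).

Record semi_arc_rep (T : finType) := SemiArcRep {
  radius : T -> R;
  extent : T -> R
}.

Definition arc (T : finType) (A : semi_arc_rep T) (i : T) (p : point) : Prop :=
  on_arc (radius A i) (extent A i) p.

Definition wf_rep (T : finType) (A : semi_arc_rep T) : Prop :=
  (forall i, 0 < radius A i) /\
  (forall i, 0 < extent A i < 2 * PI) /\
  (forall i j p, i <> j -> arc A i p -> arc A j p -> False).

Definition seg_pt (p q : point) (s : R) : point :=
  (fst p + s * (fst q - fst p), snd p + s * (snd q - snd p)).

Definition collinear_O (p q : point) : Prop :=
  fst p * snd q - snd p * fst q = 0.

(* Arc l meets the closed segment [p, q] (counted once however often met). *)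
Definition meets_seg (T : finType) (A : semi_arc_rep T) (l : T) (p q : point) : Prop :=
  exists s : R, 0 <= s <= 1 /\ arc A l (seg_pt p q s).

Definition line_of_sight (k : nat) (T : finType) (A : semi_arc_rep T) (i j : T) : Prop :=
  exists p q : point,
    arc A i p /\ arc A j q /\ collinear_O p q /\
    exists S : {set T}, (#|S| <= k)%N /\
      forall l, l <> i -> l <> j -> meets_seg A l p q -> l \in S.

Definition vis_adj (k : nat) (T : finType) (A : semi_arc_rep T) (i j : T) : Prop :=
  i <> j /\ line_of_sight k A i j.

Definition is_semi_arc_k_vis_graph (k : nat) (T : finType) (e : rel T) : Prop :=
  exists A : semi_arc_rep T, wf_rep A /\ forall i j : T, e i j <-> vis_adj k A i j.

Definition complete_graph (n : nat) : rel 'I_n := fun i j => i != j.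
Arguments complete_graph n : clear implicits.

(* Main.v *)
Require Import Defs.
From Stdlib Require Import Reals Lra Lia.
From mathcomp Require Import all_boot zify.
Local Open Scope R_scope.

Lemma cos1_0 z : -2*PI < z < 2*PI -> cos z = 1 -> z = 0.
Proof.
move=> Hz Hc.
have Hs : sin (z/2) = 0.
  have H := cos_2a_sin (z/2).
  replace (2*(z/2)) with z in H by field.
  have : sin (z/2) * sin (z/2) = 0 by lra.
  by move/Rmult_integral => [|].
have [m Hm] := sin_eq_0_0 _ Hs.
have HP := PI_RGT_0.
have Hm1 : -1 < IZR m < 1.
  split.
  - apply (Rmult_lt_reg_r PI); lra.
  - apply (Rmult_lt_reg_r PI); lra.
have : m = 0%Z.
  destruct Hm1 as [H1 H2]. apply lt_IZR in H1. apply lt_IZR in H2. lia.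
move=> Hm0; rewrite Hm0 /= in Hm; lra.
Qed.

Lemma ang_uniq x y : 0 <= x < 2*PI -> 0 <= y < 2*PI -> cos x = cos y -> sin x = sin y -> x = y.
Proof.
move=> Hx Hy Hc Hs.
have : cos (x - y) = 1.
  rewrite cos_minus Hc Hs. have := sin2_cos2 y. rewrite /Rsqr. lra.
move/cos1_0 => H. have : x - y = 0 by apply H; lra. lra.
Qed.

Definition P (r a : R) : point := (r * cos a, r * sin a).

Lemma seg_P r1 r2 a s : seg_pt (P r1 a) (P r2 a) s = P (r1 + s*(r2-r1)) a.
Proof. rewrite /seg_pt /P /=; f_equal; ring. Qed.

Lemma P_PI r a : P r (a + PI) = P (-r) a.
Proof. rewrite /P neg_cos neg_sin; f_equal; ring. Qed.

Lemma P_inv r c t a : 0 < r -> P r c = P t a ->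
  (0 < t /\ r = t /\ cos c = cos a /\ sin c = sin a) \/
  (t < 0 /\ r = -t /\ cos c = cos (a+PI) /\ sin c = sin (a+PI)).
Proof.
move=> Hr [H1 H2].
rewrite neg_cos neg_sin.
have Hsq : (r - t) * (r + t) = 0.
  have E1 := sin2_cos2 c. have E2 := sin2_cos2 a. rewrite /Rsqr in E1 E2.
  have : r*r = t*t.
    transitivity ((r*cos c)*(r*cos c) + (r*sin c)*(r*sin c)).
    - transitivity (r*r*(sin c * sin c + cos c * cos c)); [rewrite E1; ring| ring].
    rewrite H1 H2.
    transitivity (t*t*(sin a * sin a + cos a * cos a)); [ring| rewrite E2; ring].
  move=> H; lra.
case/Rmult_integral: Hsq => Hrt.
- left. have Ht : r = t by lra. subst t. split; [lra|split; [done|]].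
  split; apply (Rmult_eq_reg_l r); lra.
- right. have Ht : t = - r by lra. subst t. split; [lra|split; [lra|]].
  split; apply (Rmult_eq_reg_l r); lra.
Qed.

Lemma collP r1 r2 a : collinear_O (P r1 a) (P r2 a).
Proof. rewrite /collinear_O /P /=; ring. Qed.

Lemma card_interval n (lo hi : nat) :
  (#|[set l : 'I_n | (lo <= l < hi)%N]| <= hi - lo)%N.
Proof.
rewrite cardE.
have -> : (hi - lo = size (iota lo (hi - lo)))%N by rewrite size_iota.
rewrite -(size_map val).
apply: uniq_leq_size.
  rewrite map_inj_uniq ?enum_uniq //; exact: val_inj.
move=> x /mapP [y]; rewrite mem_enum inE => /andP [H1 H2] ->.
rewrite mem_iota H1 /=.
have Hl : (lo <= hi)%N by apply: leq_trans H1 (ltnW H2).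
by rewrite subnKC.
Qed.

Lemma INR_addn a b : INR (a + b)%N = INR a + INR b.
Proof. exact: plus_INR. Qed.
Lemma INR_muln a b : INR (a * b)%N = INR a * INR b.
Proof. exact: mult_INR. Qed.
Lemma natR_le a b : (a <= b)%N -> INR a <= INR b.
Proof. by move/leP; apply le_INR. Qed.
Lemma natR_lt a b : (a < b)%N -> INR a + 1 <= INR b.
Proof. move/natR_le; by rewrite S_INR. Qed.

Ltac toR H := first [move/natR_lt: H => H | move/natR_le: H => H];
  rewrite ?INR_addn ?INR_muln /= in H.
Ltac natR := match goal with
  | |- is_true (?a <= ?b)%N => let H := fresh "HH" in case: (leqP a b) => // H; exfalso; toR H
  | |- is_true (?a < ?b)%N => let H := fresh "HH" in case: (ltnP a b) => // H; exfalso; toR H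
  end.

Section Constr.
Variable k : nat.
Let n := (3 * k + 4)%N.
Definition uu := PI / (4 * INR k + 5).
Definition rad (l : nat) := INR l + 1.
Definition ext (l : nat) := (2 * INR l + 2 * INR k + 1) * uu.
Definition Arep : semi_arc_rep 'I_n := SemiArcRep (fun l : 'I_n => rad l) (fun l => ext l).

Lemma kpos : 0 <= INR k. Proof. exact: pos_INR. Qed.
Lemma uu_pos : 0 < uu.
Proof. rewrite /uu; have := kpos; have := PI_RGT_0 => *; apply Rdiv_lt_0_compat; lra. Qed.
Lemma HPI : PI = (4 * INR k + 5) * uu.
Proof. rewrite /uu; field; have := kpos; lra. Qed.

Lemma ord_bnd (l : 'I_n) : INR l + 1 <= 3 * INR k + 4.
Proof. have H : (nat_of_ord l < 3 * k + 4)%N := ltn_ord l. toR H. lra. Qed.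

Lemma ext_pos (l : 'I_n) : 0 < ext l.
Proof. rewrite /ext; have := uu_pos; have := kpos; have := pos_INR l. nra. Qed.

Lemma ext_lt (l : 'I_n) : ext l < 2 * PI.
Proof.
rewrite /ext HPI; have := uu_pos; have := kpos; have := ord_bnd l. nra.
Qed.

Lemma wfA : wf_rep Arep.
Proof.
split; [|split].
- move=> i /=; rewrite /rad; have := pos_INR i; lra.
- move=> i /=; split; [exact: ext_pos | exact: ext_lt].
- move=> i j p Hij [a [_ ->]] [b [_ Hb]].
  apply: Hij; apply: val_inj.
  have Hr : rad i = rad j.
    have Hj : 0 < rad j by rewrite /rad; have := pos_INR j; lra.
    have Hi : 0 < rad i by rewrite /rad; have := pos_INR i; lra.
    case: (P_inv (rad j) b (rad i) a Hj (esym Hb)).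
    + by move=> [_ [-> _]].
    + lra.
  rewrite /rad in Hr.
  have : INR (nat_of_ord i) = INR (nat_of_ord j) by lra.
  by move/INR_eq.
Qed.

Lemma mul_le_u a b : a <= b -> a * uu <= b * uu.
Proof. move=> H; apply Rmult_le_compat_r => //; have := uu_pos; lra. Qed.
Lemma mul_le_u' a b : a * uu <= b * uu -> a <= b.
Proof. move=> H; apply: (Rmult_le_reg_r uu) => //; exact: uu_pos. Qed.

Lemma arc_P (l : 'I_n) a : 0 <= a <= ext l -> Defs.arc Arep l (P (rad l) a).
Proof. by move=> H; exists a. Qed.

Lemma ord_neq (l i : 'I_n) : l <> i -> nat_of_ord l <> nat_of_ord i.
Proof. by move=> H E; apply: H; apply: val_inj. Qed.

Lemma los_lt (i j : 'I_n) : (i < j)%N -> line_of_sight k Arep i j.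
Proof.
move=> Hij.
have Hi := ord_bnd i; have Hj := ord_bnd j; have hu := uu_pos; have hk := kpos.
have hP := HPI; have hPI := PI_RGT_0.
have pi0 := pos_INR i; have pj0 := pos_INR j.
have Hjn : (nat_of_ord j < 3 * k + 4)%N := ltn_ord j.
have Hij' := Hij; toR Hij'.
have radi : 0 < rad i by rewrite /rad; have := pos_INR i; lra.
have radj : 0 < rad j by rewrite /rad; have := pos_INR j; lra.
case: (leqP j (i + k + 1)) => H1.
- exists (P (rad i) (ext i)), (P (rad j) (ext i)).
  split; first by apply: arc_P; have := ext_pos i; lra.
  split.
    apply: arc_P; split; first by have := ext_pos i; lra.
    by rewrite /ext; apply: mul_le_u; lra.
  split; first exact: collP.
  exists [set l : 'I_n | (i.+1 <= l < j)%N]; split.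
    apply: leq_trans (card_interval _ _ _) _; lia.
  move=> l Hli Hlj [s [Hs Harc]]; rewrite inE.
  have Hli' := ord_neq _ _ Hli; have Hlj' := ord_neq _ _ Hlj.
  rewrite /arc /= seg_P in Harc; case: Harc => c [Hc Heq]; change (0 <= c <= ext l) in Hc.
  have radl : 0 < rad l by rewrite /rad; have := pos_INR l; lra.
  case: (P_inv (rad l) c _ (ext i) radl (esym Heq)).
  + move=> [Ht [Hrl _]].
    have E1 : rad i <= rad l by rewrite Hrl /rad; nra.
    have E2 : rad l <= rad j by rewrite Hrl /rad; nra.
    rewrite /rad in E1 E2.
    have F1 : (nat_of_ord i <= l)%N by natR; lra.
    have F2 : (nat_of_ord l <= j)%N by natR; lra.
    apply/andP; split; lia.
  + move=> [Ht _]; exfalso. rewrite /rad in radi radj Ht; nra.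
case: (leqP j (i + 2 * k + 2)) => H2.
- have H1' := H1; toR H1'. have H2' := H2; toR H2'.
  set psi := ext j - PI.
  have Hpsi : psi = (2 * INR j - 2 * INR k - 4) * uu by rewrite /psi /ext hP; ring.
  have Hpsi0 : 0 <= psi by rewrite Hpsi; apply Rmult_le_pos; lra.
  have Hpsii : psi <= ext i by rewrite Hpsi /ext; apply: mul_le_u; lra.
  exists (P (rad i) psi), (P (rad j) (psi + PI)).
  split; first by apply: arc_P; lra.
  split; first by apply: arc_P; rewrite /psi; have := ext_pos j; lra.
  split; first by rewrite P_PI; exact: collP.
  exists [set l : 'I_n | (j - (2 * k + 2) <= l < i)%N]; split.
    apply: leq_trans (card_interval _ _ _) _; lia.
  move=> l Hli Hlj [s [Hs Harc]]; rewrite inE.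
  have Hli' := ord_neq _ _ Hli; have Hlj' := ord_neq _ _ Hlj.
  rewrite /arc /= P_PI seg_P in Harc; case: Harc => c [Hc Heq]; change (0 <= c <= ext l) in Hc.
  have radl : 0 < rad l by rewrite /rad; have := pos_INR l; lra.
  have Hcl := ext_lt l. have Hil := ext_lt i. have Hjl := ext_lt j.
  case: (P_inv (rad l) c _ psi radl (esym Heq)).
  + move=> [Ht [Hrl [Hc1 Hs1]]].
    have E1 : rad l <= rad i by rewrite Hrl /rad; nra.
    rewrite /rad in E1.
    have F1 : (nat_of_ord l <= i)%N by natR; lra.
    have Ec : c = psi by apply: ang_uniq => //; lra.
    have G : (2 * INR j - 2 * INR k - 4) <= 2 * INR l + 2 * INR k + 1.
      apply: mul_le_u'; rewrite -Hpsi -Ec; rewrite /ext in Hc; lra.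
    have F2 : (nat_of_ord j <= l + 2 * k + 2)%N by natR; lra.
    apply/andP; split; lia.
  + move=> [Ht [Hrl [Hc1 Hs1]]].
    have E1 : rad l <= rad j by rewrite Hrl /rad; nra.
    rewrite /rad in E1.
    have F1 : (nat_of_ord l <= j)%N by natR; lra.
    have Epsi : psi + PI = ext j by rewrite /psi; ring.
    have Ec : c = psi + PI by apply: ang_uniq; [lra | lra | done | done].
    have G : ext j <= ext l by rewrite -[ext j](_ : psi + PI = ext j) ?Ec; [lra | rewrite /psi; ring].
    have G' := mul_le_u' _ _ G.
    have F2 : (nat_of_ord j <= l)%N by natR; lra.
    exfalso; lia.
- have H2' := H2; toR H2'.
  set psi := ext i.
  have Epsi : psi = ext i by [].
  have Hpsi0 : 0 <= psi by have := ext_pos i; rewrite /psi; lra.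
  have Hpsij : psi + PI <= ext j.
    rewrite /psi /ext hP; rewrite -Rmult_plus_distr_r; apply: mul_le_u; lra.
  exists (P (rad i) psi), (P (rad j) (psi + PI)).
  split; first by apply: arc_P; lra.
  split; first by apply: arc_P; lra.
  split; first by rewrite P_PI; exact: collP.
  exists [set l : 'I_n | (i + 2 * k + 3 <= l < j)%N]; split.
    apply: leq_trans (card_interval _ _ _) _; lia.
  move=> l Hli Hlj [s [Hs Harc]]; rewrite inE.
  have Hli' := ord_neq _ _ Hli; have Hlj' := ord_neq _ _ Hlj.
  rewrite /arc /= P_PI seg_P in Harc; case: Harc => c [Hc Heq]; change (0 <= c <= ext l) in Hc.
  have radl : 0 < rad l by rewrite /rad; have := pos_INR l; lra.
  have Hcl := ext_lt l. have Hil := ext_lt i. have Hjl := ext_lt j.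
  case: (P_inv (rad l) c _ psi radl (esym Heq)).
  + move=> [Ht [Hrl [Hc1 Hs1]]].
    have E1 : rad l <= rad i by rewrite Hrl /rad; nra.
    rewrite /rad in E1.
    have F1 : (nat_of_ord l <= i)%N by natR; lra.
    have Ec : c = psi by apply: ang_uniq; [lra|lra|done|done].
    have G : ext i <= ext l by rewrite -/psi -Ec; lra.
    have G' := mul_le_u' _ _ G.
    have F2 : (nat_of_ord i <= l)%N by natR; lra.
    exfalso; lia.
  + move=> [Ht [Hrl [Hc1 Hs1]]].
    have E1 : rad l <= rad j by rewrite Hrl /rad; nra.
    rewrite /rad in E1.
    have F1 : (nat_of_ord l <= j)%N by natR; lra.
    have Ec : c = psi + PI by apply: ang_uniq => //; lra.
    have G : (2 * INR i + 2 * INR k + 1 + (4 * INR k + 5)) <= 2 * INR l + 2 * INR k + 1.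
      apply: mul_le_u'; rewrite Rmult_plus_distr_r -hP -Ec; rewrite /ext in Hc; lra.
    have F2 : (i + 2 * k + 3 <= l)%N by natR; lra.
    apply/andP; split; lia.
Qed.
End Constr.

Lemma los_sym kk (T : finType) (A : semi_arc_rep T) i j :
  line_of_sight kk A i j -> line_of_sight kk A j i.
Proof.
move=> [p [q [Hp [Hq [Hc [S [HS HM]]]]]]].
exists q, p; split => //; split => //; split.
  by move: Hc; rewrite /collinear_O => H; lra.
exists S; split => // l Hl1 Hl2 [s [Hs Ha]].
apply: HM => //; exists (1 - s); split; first lra.
have -> : seg_pt p q (1 - s) = seg_pt q p s.
  by rewrite /seg_pt; f_equal; ring.
done.
Qed.

Close Scope R_scope.

Theorem mainTheorem7 (k : nat) :
  is_semi_arc_k_vis_graph k (complete_graph (3 * k + 4)).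
Proof.
exists (Arep k); split; first exact: wfA.
move=> i j; rewrite /complete_graph /vis_adj; split.
- move=> Hij; split; first by move=> E; rewrite E eqxx in Hij.
  case: (ltngtP i j) => H.
  + exact: los_lt.
  + exact/los_sym/los_lt.
  + by move/val_inj: H => E; rewrite E eqxx in Hij.
- by move=> [H _]; apply/eqP.
Qed.
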